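(* Let $Q$ be a finite (right or left) Bol loop of odd order and let $H$ be a normal subloop of $Q$ of order $3$. Then $H\le Z(Q)$.
   Context: A loop is a set with a binary multiplication and a two-sided identity $1$ in which all left and right translations are bijections. A loop is right Bol if it satisfies $((xy)z)y=x((yz)y)$, left Bol if it satisfies $y(z(yx))=(y(zy))x$. A subloop is normal if it is invariant under the inner mapping group (the stabilizer of $1$ in the group generated by all left and right translations). The nucleus $N(Q)$ is the set of $x\in Q$ with $x\cdot yz=xy\cdot z$, $y\cdot xz=yx\cdot z$, $y\cdot zx=yz\cdot x$ for all $y,z$; the center is $Z(Q)=\{x\in N(Q): xy=yx\text{ for all }y\in Q\}$. *)

(* Defs.v *)
From mathcomp Require Import all_boot all_fingroup.
Set Implicit Arguments. Unset Strict Implicit. Unset Printing Implicit Defensive.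

Definition is_loop (T : finType) (mul : T -> T -> T) (one : T) : Prop :=
  [/\ forall x, mul one x = x, forall x, mul x one = x,
      forall a, bijective (mul a) & forall a, bijective (fun x => mul x a)].

Definition right_bol (T : Type) (mul : T -> T -> T) : Prop :=
  forall x y z, mul (mul (mul x y) z) y = mul x (mul (mul y z) y).

Definition left_bol (T : Type) (mul : T -> T -> T) : Prop :=
  forall x y z, mul y (mul z (mul y x)) = mul (mul y (mul z y)) x.

Definition subloop (T : finType) (mul : T -> T -> T) (one : T) (H : {set T}) : Prop :=
  [/\ one \in H,
      forall a b, a \in H -> b \in H -> mul a b \in H,
      forall a b x, a \in H -> b \in H -> mul a x = b -> x \in H &
      forall a b x, a \in H -> b \in H -> mul x a = b -> x \in H].

Section Mlt.
Variables (T : finType) (mul : T -> T -> T) (one : T).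

(* left / right translations as permutations (identity if not injective,
   which never happens in a loop) *)
Definition Lperm (a : T) : {perm T} := insubd (1%g : {perm T}) [ffun x => mul a x].
Definition Rperm (a : T) : {perm T} := insubd (1%g : {perm T}) [ffun x => mul x a].

Definition Mlt : {set {perm T}} :=
  (<<[set Lperm a | a : T] :|: [set Rperm a | a : T]>>)%g.
Definition Inn : {set {perm T}} := [set p in Mlt | p one == one].

End Mlt.

Definition normal_subloop (T : finType) (mul : T -> T -> T) (one : T) (H : {set T}) : Prop :=
  subloop mul one H /\ forall p, p \in Inn mul one -> [set p x | x in H] = H.

Definition nucleus (T : finType) (mul : T -> T -> T) : {set T} :=
  [set x | [forall y, forall z,
     [&& mul x (mul y z) == mul (mul x y) z,
         mul y (mul x z) == mul (mul y x) z &
         mul y (mul z x) == mul (mul y z) x]]].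

Definition center (T : finType) (mul : T -> T -> T) : {set T} :=
  [set x in nucleus mul | [forall y, mul x y == mul y x]].

(* Main.v *)
Require Import Defs.
From mathcomp Require Import all_boot all_fingroup.
Set Implicit Arguments. Unset Strict Implicit. Unset Printing Implicit Defensive.

Lemma perm_ffE (T : finType) (f : T -> T) (hf : injective f) x :
  (insubd (1%g : {perm T}) [ffun x => f x]) x = f x.
Proof.
have fi : injectiveb [ffun x => f x] by apply/injectiveP => a b; rewrite !ffunE; exact: hf.
by rewrite fun_of_perm.unlock /= insubdK // ffunE.
Qed.

Lemma loop_lcan (T : finType) mul (one : T) : is_loop mul one -> forall a x y, mul a x = mul a y -> x = y.
Proof. by case=> _ _ hl _ a; apply: bij_inj. Qed.
Lemma loop_rcan (T : finType) mul (one : T) : is_loop mul one -> forall a x y, mul x a = mul y a -> x = y.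
Proof. by case=> _ _ _ hr a; apply: (bij_inj (hr a)). Qed.

Lemma LpermE (T : finType) mul (one : T) : is_loop mul one -> forall a x, Lperm mul a x = mul a x.
Proof. move=> hl a x; rewrite /Lperm (perm_ffE (f:=fun x => mul a x)) //; exact: loop_lcan hl a. Qed.
Lemma RpermE (T : finType) mul (one : T) : is_loop mul one -> forall a x, Rperm mul a x = mul x a.
Proof. move=> hl a x; rewrite /Rperm (perm_ffE (f:=fun x => mul x a)) // => u v; exact: loop_rcan hl a u v. Qed.

Lemma three_elems (T : finType) (H : {set T}) a b c : #|H| = 3 -> a \in H -> b \in H -> c \in H ->
  a != b -> a != c -> b != c -> forall k, k \in H -> [\/ k = a, k = b | k = c].
Proof.
move=> h3 aH bH cH ab ac bc.
have s : [set a; b; c] \subset H.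
  by apply/subsetP=> x; rewrite !inE => /orP [/orP [] | ] /eqP ->.
have c3 : #|[set a; b; c]| = 3.
  by rewrite -setUA !cardsU1 cards1 !inE (negbTE ab) (negbTE ac) (negbTE bc).
have e : [set a; b; c] = H by apply/eqP; rewrite eqEcard s h3 c3.
move=> k; rewrite -e !inE => /orP [/orP [] | ] /eqP ->.
- exact: Or31.
- exact: Or32.
- exact: Or33.
Qed.

Lemma H_struct (T : finType) mul (one : T) (H : {set T}) :
  is_loop mul one -> one \in H -> (forall a b, a \in H -> b \in H -> mul a b \in H) ->
  #|H| = 3 -> forall g, g \in H -> g != one ->
  [/\ mul g g \in H, mul g g != one, mul g g != g, mul (mul g g) g = one &
      forall k, k \in H -> [\/ k = one, k = g | k = mul g g]].
Proof.
move=> hl oH cl h3 g gH g1.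
have [m1 _ _ _] := hl.
have [_ m2 _ _] := hl.
have ggH : mul g g \in H by apply: cl.
have ggg : mul g g != g.
  apply/eqP => e; move/eqP: g1; apply; apply: (loop_rcan hl (a:=g)); by rewrite e m1.
have gg1 : mul g g != one.
  apply/eqP => e.
  have : ~~ (H \subset [set one; g]).
    apply/negP => /subset_leq_card; rewrite cards2 h3.
    by case: (one != g).
  case/subsetPn => c cH; rewrite !inE negb_or => /andP [c1 cg].
  have gcH : mul g c \in H by apply: cl.
  have og : one != g by rewrite eq_sym.
  have oc : one != c by rewrite eq_sym.
  have gc : g != c by rewrite eq_sym.
  case: (three_elems h3 oH gH cH og oc gc gcH).
  - rewrite -e => /(loop_lcan hl) /eqP; by rewrite eq_sym (negbTE gc).
  - rewrite -{2}(m2 g) => /(loop_lcan hl) /eqP; by rewrite (negbTE c1).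
  - rewrite -{2}(m1 c) => /(loop_rcan hl) /eqP; by rewrite (negbTE g1).
have gnn : g != mul g g by rewrite eq_sym.
have ogg : one != mul g g by rewrite eq_sym.
have og : one != g by rewrite eq_sym.
have all3 := three_elems h3 oH gH ggH og ogg gnn.
split => //.
case: (all3 _ (cl _ _ ggH gH)) => // e.
- move/eqP: gg1; case; apply: (loop_rcan hl (a:=g)); by rewrite e m1.
- move/eqP: g1; case; apply: (loop_lcan hl (a:=mul g g)); by rewrite e m2.
Qed.

Lemma Lperm_Mlt (T : finType) (mul : T -> T -> T) a : Lperm mul a \in Mlt mul.
Proof. by apply: mem_gen; rewrite inE; apply/orP; left; apply: imset_f. Qed.
Lemma Rperm_Mlt (T : finType) (mul : T -> T -> T) a : Rperm mul a \in Mlt mul.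
Proof. by apply: mem_gen; rewrite inE; apply/orP; right; apply: imset_f. Qed.

Lemma norm_img (T : finType) mul (one : T) H : normal_subloop mul one H ->
  forall p, p \in Mlt mul -> p one = one -> forall h, h \in H -> p h \in H.
Proof.
case=> _ hn p pM p1 h hH.
have pI : p \in Inn mul one by rewrite inE pM; apply/eqP.
by rewrite -(hn p pI); apply: imset_f.
Qed.

Lemma normF1 (T : finType) mul (one : T) H : is_loop mul one -> normal_subloop mul one H ->
  forall h z, h \in H -> exists2 k, k \in H & mul h z = mul z k.
Proof.
move=> hl hn h z hH.
have [m1 m2 _ _] := hl.
pose p := (Rperm mul z * (Lperm mul z)^-1)%g.
have pE : forall x, Lperm mul z (p x) = mul x z.
  by move=> x; rewrite /p permM permKV (RpermE hl).
have pM : p \in Mlt mul by rewrite groupM ?groupV ?Lperm_Mlt ?Rperm_Mlt.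
have p1 : p one = one.
  apply: (@loop_lcan _ mul one hl z); by rewrite m2 -(LpermE hl) pE m1.
exists (p h); first exact: (norm_img hn pM p1 hH).
by rewrite -[RHS](LpermE hl) pE.
Qed.

Lemma normF2 (T : finType) mul (one : T) H : is_loop mul one -> normal_subloop mul one H ->
  forall h z, h \in H -> exists2 k, k \in H & mul z h = mul k z.
Proof.
move=> hl hn h z hH.
have [m1 m2 _ _] := hl.
pose p := (Lperm mul z * (Rperm mul z)^-1)%g.
have pE : forall x, Rperm mul z (p x) = mul z x.
  by move=> x; rewrite /p permM permKV (LpermE hl).
have pM : p \in Mlt mul by rewrite groupM ?groupV ?Lperm_Mlt ?Rperm_Mlt.
have p1 : p one = one.
  apply: (@loop_rcan _ mul one hl z); by rewrite m1 -(RpermE hl) pE m2.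
exists (p h); first exact: (norm_img hn pM p1 hH).
by rewrite -[RHS](RpermE hl) pE.
Qed.

Lemma normF3 (T : finType) mul (one : T) H : is_loop mul one -> normal_subloop mul one H ->
  forall h x z, h \in H -> exists2 k, k \in H & mul (mul x h) z = mul (mul x z) k.
Proof.
move=> hl hn h x z hH.
have [m1 m2 _ _] := hl.
pose p := (Lperm mul x * Rperm mul z * (Lperm mul (mul x z))^-1)%g.
have pE : forall y, Lperm mul (mul x z) (p y) = mul (mul x y) z.
  by move=> y; rewrite /p !permM permKV (RpermE hl) (LpermE hl).
have pM : p \in Mlt mul by rewrite !groupM ?groupV ?Lperm_Mlt ?Rperm_Mlt.
have p1 : p one = one.
  apply: (@loop_lcan _ mul one hl (mul x z)); by rewrite m2 -(LpermE hl) pE m2.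
exists (p h); first exact: (norm_img hn pM p1 hH).
by rewrite -[RHS](LpermE hl) pE.
Qed.

Lemma normF4 (T : finType) mul (one : T) H : is_loop mul one -> normal_subloop mul one H ->
  forall h x z, h \in H -> exists2 k, k \in H & mul z (mul h x) = mul k (mul z x).
Proof.
move=> hl hn h x z hH.
have [m1 m2 _ _] := hl.
pose p := (Rperm mul x * Lperm mul z * (Rperm mul (mul z x))^-1)%g.
have pE : forall y, Rperm mul (mul z x) (p y) = mul z (mul y x).
  by move=> y; rewrite /p !permM permKV (RpermE hl) (LpermE hl).
have pM : p \in Mlt mul by rewrite !groupM ?groupV ?Lperm_Mlt ?Rperm_Mlt.
have p1 : p one = one.
  apply: (@loop_rcan _ mul one hl (mul z x)); by rewrite m1 -(RpermE hl) pE m1.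
exists (p h); first exact: (norm_img hn pM p1 hH).
by rewrite -[RHS](RpermE hl) pE.
Qed.

Lemma Rpow (T : finType) mul (one : T) : is_loop mul one -> right_bol mul ->
  forall z n, exists c, (Rperm mul z ^+ n)%g = Rperm mul c.
Proof.
move=> hl hb z.
have [m1 m2 _ _] := hl.
have R1 : Rperm mul one = 1%g by apply/permP => x; rewrite (RpermE hl) perm1 m2.
have Rt : forall c, (Rperm mul z * Rperm mul c * Rperm mul z)%g = Rperm mul (mul (mul z c) z).
  by move=> c; apply/permP => x; rewrite !permM !(RpermE hl) hb.
suff : forall n, (exists c, (Rperm mul z ^+ n)%g = Rperm mul c) /\
                 (exists c, (Rperm mul z ^+ n.+1)%g = Rperm mul c) by move=> h n; case: (h n).
elim=> [|n [[c0 h0] [c1 h1]]].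
  by split; [exists one; rewrite expg0 R1 | exists z; rewrite expg1].
split; first by exists c1.
exists (mul (mul z c0) z); rewrite -Rt -h0.
by rewrite -expgS -expgSr.
Qed.

Lemma ord_dvd (T : finType) mul (one : T) : is_loop mul one -> right_bol mul ->
  forall z, (#[Rperm mul z]%g %| #|T|).
Proof.
move=> hl hb z.
have [m1 m2 _ _] := hl.
set P := Rperm mul z.
have stab : forall x, 'C_(<[P]>%G)[x | 'P]%g = 1%g.
  move=> x; apply/eqP; rewrite eqEsubset sub1G andbT; apply/subsetP => q.
  rewrite !inE => /andP [/cycleP [k ->]]; case: (Rpow hl hb z k) => c ->.
  rewrite sub1set inE /= apermE (RpermE hl) => /eqP e.
  have -> : c = one by apply: (loop_lcan hl (a:=x)); rewrite e m2.
  by apply/eqP/permP => y; rewrite (RpermE hl) perm1 m2.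
have acts : [acts <[P]>%G, on [set: T] | 'P].
  by apply/actsP => a _ x; rewrite !inE.
have := @card_uniform_partition _ #[P]%g _ _ ^~ (orbit_partition acts).
rewrite cardsT => ->; first exact: dvdn_mull.
move=> O /imsetP [x _ ->].
have := card_orbit_stab 'P <[P]>%G x; rewrite stab cards1 muln1 => ->.
by [].
Qed.

Definition F1P (T : finType) (mul : T -> T -> T) (H : {set T}) :=
  forall h z, h \in H -> exists2 k, k \in H & mul h z = mul z k.
Definition F3P (T : finType) (mul : T -> T -> T) (H : {set T}) :=
  forall h x z, h \in H -> exists2 k, k \in H & mul (mul x h) z = mul (mul x z) k.

Lemma good (T : finType) mul (one : T) (H : {set T}) :
  is_loop mul one -> right_bol mul -> odd #|T| -> one \in H ->
  (forall a b, a \in H -> b \in H -> mul a b \in H) -> #|H| = 3 ->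
  F1P mul H -> F3P mul H ->
  forall g, g \in H -> g != one -> forall z,
  mul g z = mul z g /\ forall x, mul (mul x g) z = mul (mul x z) g.
Proof.
move=> hl hb oT oH cl h3 F1 F3 g gH g1 z.
have [m1 m2 _ _] := hl.
have [ggH gg1 ggg gg3 all3] := H_struct hl oH cl h3 gH g1.
have ralt : forall x y, mul (mul x y) y = mul x (mul y y).
  by move=> x y; have := hb x y one; rewrite !m2.
have cube : forall x, mul (mul (mul x g) g) g = x by move=> x; rewrite hb gg3 m2.
have cube2 : forall x, mul (mul x (mul g g)) g = x by move=> x; rewrite -ralt cube.
have gg1' : forall y, mul y (mul g g) <> y.
  move=> y e; move/eqP: gg1; apply; apply: (loop_lcan hl (a:=y)); by rewrite e m2.
have g1' : forall y, mul y g <> y.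
  move=> y e; move/eqP: g1; apply; apply: (loop_lcan hl (a:=y)); by rewrite e m2.
have D : (mul g z = mul z g /\ forall x, mul (mul x g) z = mul (mul x z) g) \/
         (mul g z = mul z (mul g g) /\ forall x, mul (mul x g) z = mul (mul x z) (mul g g)).
  have [k kH ek] := F1 g z gH.
  have hk' : forall x, exists2 k', k' \in H & k' != one /\ mul (mul x g) z = mul (mul x z) k'.
    move=> x; have [k' k'H ek'] := F3 g x z gH; exists k' => //; split => //.
    apply/eqP => e1; rewrite e1 m2 in ek'.
    exact: (g1' x (loop_rcan hl ek')).
  case: (all3 k kH) => ek0; subst k.
  - by move: ek; rewrite m2 -{2}(m1 z) => /(loop_rcan hl) e; move/eqP: g1.
  - left; split => // x; have [k' k'H [k'1 e]] := hk' x.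
    case: (all3 k' k'H) => ek0; subst k' => //; first by move/eqP: k'1.
    exfalso; have := hb x g z; rewrite e ek ralt cube2 => /(loop_lcan hl) e2.
    exact: (gg1' z (esym e2)).
  - right; split => // x; have [k' k'H [k'1 e]] := hk' x.
    case: (all3 k' k'H) => ek0; subst k' => //; first by move/eqP: k'1.
    exfalso; have := hb x g z; rewrite e ek cube2 ralt => e2.
    exact: (gg1' _ e2).
case: D => // [[_ bad]].
exfalso.
set P := Rperm mul z.
pose rg y := mul y g.
have B1 : forall y, P (rg y) = rg (rg (P y)).
  by move=> y; rewrite /rg /P !(RpermE hl) bad ralt.
have B2 : forall y, P (rg (rg y)) = rg (P y).
  by move=> y; rewrite B1 B1 /rg cube.
have It : forall n y, (P ^+ n)%g (rg y) = (if odd n then rg (rg ((P ^+ n)%g y)) else rg ((P ^+ n)%g y)) /\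
                      (P ^+ n)%g (rg (rg y)) = (if odd n then rg ((P ^+ n)%g y) else rg (rg ((P ^+ n)%g y))).
  elim=> [|n IH] y; first by rewrite expg0 !perm1.
  rewrite expgSr !permM /=; case: (IH y) => -> ->.
  by case: (odd n) => /=; split; [exact: B2 | exact: B1 | exact: B1 | exact: B2].
have on : odd #[P]%g by apply: (dvdn_odd (ord_dvd hl hb z)).
case: (It #[P]%g one) => e _; move: e; rewrite expg_order on !perm1 /rg m1 => e.
by move/eqP: ggg; rewrite -e.
Qed.

Lemma core (T : finType) mul (one : T) (H : {set T}) :
  is_loop mul one -> right_bol mul -> odd #|T| -> one \in H ->
  (forall a b, a \in H -> b \in H -> mul a b \in H) -> #|H| = 3 ->
  F1P mul H -> F3P mul H ->
  forall g, g \in H -> g != one -> forall x z,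
  [/\ mul g z = mul z g, mul (mul x g) z = mul (mul x z) g & mul x (mul z g) = mul (mul x z) g].
Proof.
move=> hl hb oT oH cl h3 F1 F3 g gH g1 x z.
have [m1 m2 _ _] := hl.
have G := good hl hb oT oH cl h3 F1 F3.
have [ggH gg1 ggg gg3 _] := H_struct hl oH cl h3 gH g1.
have ralt : forall x y, mul (mul x y) y = mul x (mul y y).
  by move=> x' y; have := hb x' y one; rewrite !m2.
have rn : forall u, u \in H -> u != one -> forall x z, mul x (mul z (mul u u)) = mul (mul x z) (mul u u).
  move=> u uH u1 x' z'; have [e1 _] := G u uH u1 z'; have [_ e2] := G u uH u1 z'.
  by rewrite -ralt -e1 -hb e2 ralt.
have gggg : mul (mul g g) (mul g g) = g by rewrite -ralt gg3 m1.
have [e1 e2] := G g gH g1 z.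
by split => //; rewrite -gggg rn.
Qed.

Lemma opp_loop (T : finType) mul (one : T) : is_loop mul one -> is_loop (fun x y => mul y x) one.
Proof. by case=> a b c d; split. Qed.

Theorem theorem4p12 (T : finType) (mul : T -> T -> T) (one : T) (H : {set T}) :
  is_loop mul one ->
  (right_bol mul \/ left_bol mul) ->
  odd #|T| ->
  normal_subloop mul one H ->
  #|H| = 3 ->
  H \subset center mul.
Proof.
move=> hl hb oT hn h3.
have [[oH cl _ _] _] := hn.
have [m1 m2 _ _] := hl.
apply/subsetP => g gH.
case: (eqVneq g one) => [-> | g1].
  rewrite !inE; apply/andP; split.
    by apply/forallP => y; apply/forallP => z; rewrite !m1 !m2 !eqxx.
  by apply/forallP => y; rewrite m1 m2.
case: hb => hb.
- have C := core hl hb oT oH cl h3 (normF1 hl hn) (normF3 hl hn) gH g1.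
  rewrite !inE; apply/andP; split; last by apply/forallP => y; have [-> _ _] := C one y.
  apply/forallP => y; apply/forallP => z.
  have [c1 c2 c3] := C y z.
  have [d1 _ _] := C y (mul y z).
  have [f1 _ _] := C y y.
  apply/and3P; split; apply/eqP.
  + by rewrite d1 f1 c2.
  + by rewrite c1 c3 c2.
  + by rewrite c3.
- have hl' := opp_loop hl.
  have hb' : right_bol (fun x y => mul y x) by move=> x y z; exact: hb.
  have cl' : forall a b, a \in H -> b \in H -> mul b a \in H by move=> a b aH bH; exact: cl.
  have F1' : F1P (fun x y => mul y x) H by move=> h z hH; exact: normF2 hl hn h z hH.
  have F3' : F3P (fun x y => mul y x) H by move=> h x z hH; exact: normF4 hl hn h x z hH.
  have C := core hl' hb' oT oH cl' h3 F1' F3' gH g1.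
  rewrite !inE; apply/andP; split; last by apply/forallP => y; have [-> _ _] := C one y.
  apply/forallP => y; apply/forallP => z.
  have [c1 c2 c3] := C z y.
  have [d1 _ _] := C y (mul y z).
  have [f1 _ _] := C z z.
  have [e1 _ _] := C z y.
  have [k1 _ _] := C y y.
  simpl in c1, c2, c3, d1, f1, e1, k1.
  apply/and3P; split; apply/eqP.
  + by rewrite c3.
  + by rewrite c2 -c3 c1.
  + by rewrite f1 c2 d1.
Qed.
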